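(* Let $G$ be a graph on $n$ vertices with maximum degree at most $\Delta_{\max}$, let $t\in\mathbb{N}$, let $0<\varepsilon\leq\frac12$, and let $\eta$ satisfy $1\leq \eta\leq \frac{\varepsilon^2}{128\log n}\cdot\frac{\Delta_{\max}}{t}$. Let $c:E(G)\to[t]$ be a (not necessarily proper) edge-colouring such that for every edge $uv\in E(G)$ and every $i\in[t]$, $$s_{c(uv)}(u)+s_{c(uv)}(v)\leq \eta+s_i(u)+s_i(v).$$ Then $\tilde{d}\leq (1+\varepsilon)\frac{\Delta_{\max}}{t}$.
   Context: For a vertex $v$ and colour $i\in[t]$, $d_i(v)$ is the number of edges of colour $i$ incident to $v$, and $s_i(v)=\max\{d_i(v)-\frac{\Delta_{\max}}{t},0\}$ is the surplus of colour $i$ at $v$. $\tilde{d}=\max_{i\in[t]}\max_{v\in V(G)} d_i(v)$. *)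

(* Defs.v *)
From HB Require Import structures.
From mathcomp Require Import all_boot all_order all_algebra.
From mathcomp Require Import reals exp.
Set Implicit Arguments.
Unset Strict Implicit.
Unset Printing Implicit Defensive.
Import Order.TTheory GRing.Theory Num.Theory.
Local Open Scope ring_scope.

Definition simple_graph (T : finType) (e : rel T) : Prop :=
  (forall x, ~~ e x x) /\ (forall x y, e x y = e y x).

Definition deg (T : finType) (e : rel T) (v : T) : nat := #|[set u | e v u]|.

(* An edge-colouring c : E(G) -> [t], given as a function on ordered pairs
   that is symmetric on edges (only its values on edges matter). *)
Definition edge_colouring (T : finType) (e : rel T) (t : nat)
  (c : T -> T -> 'I_t) : Prop :=
  forall u v, e u v -> c u v = c v u.

Definition dcol (T : finType) (e : rel T) (t : nat) (c : T -> T -> 'I_t)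
  (i : 'I_t) (v : T) : nat := #|[set u | e v u && (c v u == i)]|.

Definition surplus (R : realType) (T : finType) (e : rel T) (t : nat)
  (c : T -> T -> 'I_t) (Dmax : nat) (i : 'I_t) (v : T) : R :=
  Num.max ((dcol e c i v)%:R - Dmax%:R / t%:R) 0.

Definition dtilde (T : finType) (e : rel T) (t : nat) (c : T -> T -> 'I_t) : nat :=
  \max_(i < t) \max_(v : T) dcol e c i v.

(* Main.v *)
Require Import Defs.
From HB Require Import structures.
From mathcomp Require Import all_boot all_order all_algebra.
From mathcomp Require Import reals exp.
From mathcomp Require Import lra sequences archimedean.
Import Order.TTheory GRing.Theory Num.Theory.
Local Open Scope ring_scope.

Section Count.
Variables (R : realType) (T : finType) (e : rel T) (Dmax t : nat)
  (c : T -> T -> 'I_t) (eta : R).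
Hypothesis He : simple_graph e.
Hypothesis Hc : edge_colouring e c.
Hypothesis Hcond : forall u v, e u v -> forall i : 'I_t,
     surplus R e c Dmax (c u v) u + surplus R e c Dmax (c u v) v
       <= eta + surplus R e c Dmax i u + surplus R e c Dmax i v.

Local Notation s := (surplus R e c Dmax).
Local Notation del := (Dmax%:R / t%:R : R).

Lemma dcol_sum (i : 'I_t) v : dcol e c i v = (\sum_u (e v u && (c v u == i)))%N.
Proof.
rewrite /dcol -sum1_card big_mkcond /=; apply: eq_bigr => u _.
by rewrite inE; case: (_ && _).
Qed.

Lemma s_ge0 i v : 0 <= s i v.
Proof. by rewrite /surplus le_max lexx orbT. Qed.

Lemma count_surplus (a b : 'I_t) (th x : R) : 0 < th -> (forall i u, s i u <= x) ->
  #|[set v | th <= s a v - s b v]|%:R * (del + th)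
   <= #|[set v | th - eta <= s b v - s a v]|%:R * (del + x - th + eta).
Proof.
move=> th0 Hx.
set A := [set v | _]; set B := [set v | _].
have hA v : v \in A -> del + th <= (dcol e c a v)%:R.
  rewrite inE => h.
  have := s_ge0 b v => hb.
  have : th <= s a v by lra.
  rewrite /surplus le_max => /orP[|]; first by lra.
  by move=> h0; exfalso; lra.
have hB u : u \in B -> (dcol e c a u)%:R <= del + x - th + eta.
  rewrite inE => h.
  have := Hx b u => hx.
  have : (dcol e c a u)%:R - del <= s a u by rewrite /surplus le_max lexx.
  lra.
have edge v u : v \in A -> e v u -> c v u = a -> u \in B.
  rewrite !inE => hv evu cvu.
  have := Hcond _ _ evu b; rewrite cvu; lra.
have hnat : (\sum_(v in A) dcol e c a v <= \sum_(u in B) dcol e c a u)%N.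
  under eq_bigr do rewrite dcol_sum.
  rewrite exchange_big /= [X in (_ <= X)%N]big_mkcond /=.
  apply: leq_sum => u _.
  case: ifP => uB.
    rewrite dcol_sum big_mkcond /=; apply: leq_sum => v _.
    case: ifP => // _.
    case evu: (e v u) => //=.
    have euv : e u v by rewrite (proj2 He) .
    by rewrite euv Hc.
  rewrite big1 // => v vA.
  case evu: (e v u) => //=.
  case: eqP => // cvu.
  by rewrite (edge v u vA evu cvu) in uB.
have h1 : #|A|%:R * (del + th) <= \sum_(v in A) (dcol e c a v)%:R.
  by rewrite mulr_natl -sumr_const; apply: ler_sum.
have h2 : \sum_(u in B) (dcol e c a u)%:R <= #|B|%:R * (del + x - th + eta).
  by rewrite mulr_natl -sumr_const; apply: ler_sum.
apply: (le_trans h1); apply: le_trans h2.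
by rewrite -!natr_sum ler_nat.
Qed.
End Count.
Lemma exp_trick (R : realType) (w : R) : expR w * (1 - w) <= 1.
Proof.
have h1 := expRxMexpNx_1 w.
have h2 := expR_ge1Dx (- w).
have h3 := expR_ge0 w.
rewrite -h1; apply: ler_wpM2l => //; lra.
Qed.

Lemma deg_sum (T : finType) (e : rel T) (t : nat) (c : T -> T -> 'I_t) v :
  (\sum_(i < t) dcol e c i v)%N = deg e v.
Proof.
rewrite (eq_bigr _ (fun i _ => dcol_sum _ e _ c i v)).
rewrite exchange_big /= /deg -sum1_card [RHS]big_mkcond /=.
apply: eq_bigr => u _; rewrite inE.
case: (e v u) => /=; last by rewrite big1.
rewrite (bigD1 (c v u)) //= eqxx big1 ?addn0 // => i /negbTE.
by rewrite eq_sym => ->.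
Qed.

Theorem theorem4p2 (R : realType) (T : finType) (e : rel T) (Dmax t : nat)
  (eps eta : R) (c : T -> T -> 'I_t) :
  simple_graph e ->
  (forall v, (deg e v <= Dmax)%N) ->
  0 < eps -> eps <= 1 / 2 ->
  1 <= eta ->
  eta <= eps ^+ 2 / (128 * ln (#|T|%:R)) * (Dmax%:R / t%:R) ->
  edge_colouring e c ->
  (forall u v, e u v -> forall i : 'I_t,
     surplus R e c Dmax (c u v) u + surplus R e c Dmax (c u v) v
       <= eta + surplus R e c Dmax i u + surplus R e c Dmax i v) ->
  (dtilde e c)%:R <= (1 + eps) * (Dmax%:R / t%:R) :> R.
Proof.
set n := #|T|; set del := Dmax%:R / t%:R.
set L := ln (n%:R : R).
move=> Hsg Hdeg eps0 epsh eta1 Heta Hc Hcond.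
rewrite leNgt; apply/negP => Hbig.
have del0 : 0 <= del by rewrite divr_ge0.
have L0 : 0 < L.
  rewrite ltNge; apply/negP => hL.
  have : eps ^+ 2 / (128 * L) * del <= 0.
    apply: mulr_le0_ge0 => //; apply: mulr_ge0_le0; first exact: exprn_ge0 (ltW eps0).
    by rewrite invr_le0; lra.
  lra.
have n2 : (1 < n)%N.
  rewrite ltnNge; apply/negP => hn.
  have : L <= 0 by apply: ln_le0; rewrite (ler_nat R n 1).
  lra.
have t0 : (0 < t)%N.
  rewrite lt0n; apply/negP => /eqP t0'.
  have d0 : del = 0 by rewrite /del t0' invr0 mulr0.
  have : (dtilde e c <= 0)%N.
    apply/bigop.bigmax_leqP => i _; exfalso; move: (ltn_ord i); move: (nat_of_ord i) => k; by rewrite t0'.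
  rewrite leqn0 => /eqP dt0; move: Hbig; rewrite dt0 d0 mulr0 ltxx //.
have cI : (0 < #|'I_t|)%N by rewrite card_ord.
have [a Ha] := bigop.eq_bigmax (fun i : 'I_t => (\max_(v : T) dcol e c i v)%N) cI.
have Tn : (0 < #|T|)%N by apply: ltn_trans n2.
have [v0 Hv0] := bigop.eq_bigmax (fun v : T => dcol e c a v) Tn.
set x := (dtilde e c)%:R - del.
have hx : eps * del < x by rewrite /x; lra.
have x0 : 0 < x by have := mulr_ge0 (ltW eps0) del0; lra.
have dv0 : dcol e c a v0 = dtilde e c by rewrite /dtilde Ha Hv0.
have sav0 : surplus R e c Dmax a v0 = x.
  by rewrite /surplus dv0 -/x; apply/max_idPl; rewrite ltW.
have Hx i u : surplus R e c Dmax i u <= x.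
  rewrite /surplus ge_max (ltW x0) andbT /x.
  rewrite -/del; suff: (dcol e c i u)%:R <= (dtilde e c)%:R :> R by lra.
  rewrite ler_nat.
  rewrite /dtilde.
  have h1 := @bigop.leq_bigmax _ (fun v => dcol e c i v) u.
  have h2 := @bigop.leq_bigmax _ (fun j : 'I_t => (\max_(v : T) dcol e c j v)%N) i.
  exact: leq_trans h1 h2.
have [b Hb] : exists b : 'I_t, (dcol e c b v0)%:R <= del.
  apply/existsP; apply/negP => /existsP hall.
  have : (Dmax%:R : R) < \sum_(i < t) (dcol e c i v0)%:R.
    have -> : (Dmax%:R : R) = \sum_(i < t) del.
      by rewrite sumr_const card_ord -(mulr_natr del) /del divfK // pnatr_eq0 -lt0n.
    have hlt i : del < (dcol e c i v0)%:R.
      rewrite ltNge; apply/negP => hi; apply: hall; by exists i.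
    rewrite [X in X < _](bigD1 (Ordinal t0)) // [X in _ < X](bigD1 (Ordinal t0)) //=.
    apply: ltr_leD => //; apply: ler_sum => i _; exact: ltW.
  by rewrite -natr_sum deg_sum ltr_nat ltnNge Hdeg.
have sbv0 : surplus R e c Dmax b v0 = 0.
  by rewrite /surplus -/del; apply/max_idPr; lra.

have eta0 : 0 < eta by lra.
have del_pos : 0 < del.
  rewrite ltNge; apply/negP => hd.
  have : eps ^+ 2 / (128 * L) * del <= 0.
    apply: mulr_ge0_le0 => //; apply: divr_ge0; first exact: exprn_ge0 (ltW eps0).
    lra.
  lra.
have CS := @count_surplus R T e Dmax t c eta Hsg Hc Hcond.
pose s := surplus R e c Dmax.
pose Q := fun k : nat => if odd k then [set v | x - k%:R * eta <= s b v - s a v]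
                         else [set v | x - k%:R * eta <= s a v - s b v].
have E1 k : x - k%:R * eta - eta = x - k.+1%:R * eta.
  by rewrite -[k.+1]addn1 natrD mulrDl mul1r; lra.
have E2 k : del + x - (x - k%:R * eta) + eta = del + k.+1%:R * eta.
  by rewrite -[k.+1]addn1 natrD mulrDl mul1r; lra.
have step k : 0 < x - k%:R * eta ->
    #|Q k|%:R * (del + (x - k%:R * eta)) <= #|Q k.+1|%:R * (del + k.+1%:R * eta).
  move=> hth; rewrite /Q /=.
  case: (odd k) => /=.
    have H := CS b a (x - k%:R * eta) x hth Hx.
    by rewrite -/del E1 E2 in H.
  have H := CS a b (x - k%:R * eta) x hth Hx.
  by rewrite -/del E1 E2 in H.
have x4 : 0 <= x / (4 * eta) by apply: divr_ge0; lra.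
set K := Num.truncn (x / (4 * eta)).
have /andP[HK1 HK2] := truncn_itv x4.
rewrite -/K ler_pdivlMr ?ltr_pdivrMr in HK1 HK2; try lra.
have KE : K%:R * eta <= x / 4 by lra.
have K1 : x < (K%:R + 1) * (4 * eta) by rewrite -natr1 in HK2.
pose num := del + x - K%:R * eta.
pose den := del + K%:R * eta.
have Keta0 : 0 <= K%:R * eta by apply: mulr_ge0 => //; lra.
have den0 : 0 < den by rewrite /den; lra.
have num0 : 0 <= num by rewrite /num; lra.
pose rho := num / den.
have rho0 : 0 <= rho by apply: divr_ge0 => //; lra.
have claim k : (k <= K)%N -> rho ^+ k <= #|Q k|%:R.
  elim: k => [_|k IH hk].
    rewrite expr0 ler1n card_gt0; apply/set0Pn; exists v0.
    by rewrite /Q /= inE mul0r subr0 /s sav0 sbv0 subr0.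
  have hk' : (k <= K)%N by apply: ltnW.
  have IH' := IH hk'.
  have kK : k%:R * eta <= K%:R * eta.
    by apply: ler_wpM2r; [lra | rewrite ler_nat].
  have k1K : k.+1%:R * eta <= K%:R * eta.
    by apply: ler_wpM2r; [lra | rewrite ler_nat].
  have hth : 0 < x - k%:R * eta by lra.
  have hs := step k hth.
  have k1e : 0 <= k.+1%:R * eta by apply: mulr_ge0 => //; lra.
  set D := del + k.+1%:R * eta in hs.
  have D0 : 0 < D by rewrite /D; lra.
  have hrD : rho * D <= del + (x - k%:R * eta).
    rewrite /rho mulrAC ler_pdivrMr //.
    have h1 : num * D <= num * den by apply: ler_wpM2l => //; rewrite /D /den; lra.
    have h2 : num * den <= (del + (x - k%:R * eta)) * den.
      by apply: ler_wpM2r; [lra | rewrite /num; lra].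
    lra.
  rewrite -(ler_pM2r D0) exprSr -mulrA.
  apply: (le_trans (ler_wpM2r (mulr_ge0 rho0 (ltW D0)) IH')).
  apply: le_trans hs.
  by apply: ler_wpM2l.
have hQ : rho ^+ K <= n%:R.
  apply: (le_trans (claim K (leqnn K))).
  by rewrite ler_nat /n max_card.
pose y := 4 * eps / 9.
have hxe : eps * x <= x / 2.
  have : 0 <= (1/2 - eps) * x by apply: mulr_ge0; lra.
  lra.
have hrho : 1 + y <= rho.
  rewrite /rho ler_pdivlMr //.
  have h3 : (1 + y) * den <= (1 + y) * (del + x / 4).
    by apply: ler_wpM2l; rewrite /y /den; lra.
  rewrite /num; rewrite /y in h3 *; lra.
pose w := 4 * eps / 11.
have hw : expR w <= 1 + y.
  have h1 := exp_trick _ w.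
  have h2 : 1 <= (1 + y) * (1 - w).
    have : eps * eps <= eps / 2.
      have : 0 <= (1/2 - eps) * eps by apply: mulr_ge0; lra.
      lra.
    rewrite /y /w; lra.
  have h3 := expR_ge0 w.
  have h4 : expR w * 1 <= expR w * ((1 + y) * (1 - w)) by apply: ler_wpM2l.
  have h5 : expR w * (1 - w) * (1 + y) <= 1 * (1 + y).
    by apply: ler_wpM2r => //; rewrite /y; lra.
  rewrite mulr1 in h4.
  have : expR w * ((1 + y) * (1 - w)) = expR w * (1 - w) * (1 + y) by rewrite [(1 + y) * _]mulrC mulrA.
  lra.
have n0 : 0 < (n%:R : R) by rewrite ltr0n; apply: ltn_trans n2.
have hKw : K%:R * w <= L.
  rewrite -ler_expR /L lnK ?posrE // expRM_natl.
  apply: le_trans hQ.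
  apply: (@le_trans _ _ ((1 + y) ^+ K)).
    by apply: lerXn2r => //; rewrite nnegrE ?expR_ge0 //; rewrite /y; lra.
  by apply: lerXn2r => //; rewrite nnegrE //; rewrite /y; lra.
have He2 : eta * (128 * L) <= eps * eps * del.
  rewrite -ler_pdivlMr; last lra.
  by rewrite mulrAC -expr2.
have hA : eps * (eps * del) < eps * x by rewrite ltr_pM2l.
have hB : eps * x < eps * ((K%:R + 1) * (4 * eta)) by rewrite ltr_pM2l.
have hC : (32 * L) * eta < (eps * (K%:R + 1)) * eta by lra.
rewrite ltr_pM2r // in hC.
have hL : L < 1 / 58 by rewrite /w in hKw; lra.
have hn : (n%:R : R) < 2.
  have h1 := exp_trick _ (1 / 58 : R).
  have : expR L <= expR (1 / 58) by rewrite ler_expR ltW.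
  rewrite /L lnK ?posrE //.
  lra.
have : (2 : R) <= n%:R by rewrite (ler_nat R 2 n).
lra.
Qed.
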